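(* Let $g_1,\dots,g_m\in\mathbb{R}[\mathbf{x}]$, $\mathbf{X}=\{\mathbf{x}\in\mathbb{R}^n:g_1(\mathbf{x})\ge0,\dots,g_m(\mathbf{x})\ge0\}$, and assume the quadratic module $\mathcal{M}(\mathfrak{g})$ is Archimedean. Let $f\in\mathbb{R}[\mathbf{x}]$ be positive on $\mathbf{X}$, let $\mathscr{A}=\operatorname{supp}(f)\cup\bigcup_{j=1}^m\operatorname{supp}(g_j)$, and let $\mathbf{R}$ be a binary matrix whose columns are the sign symmetries of $\mathscr{A}$. Then $f=\sigma_0+\sum_{j=1}^m\sigma_jg_j$ for some sums of squares polynomials $\sigma_0,\dots,\sigma_m$ such that $\mathbf{R}^\intercal\alpha\equiv\mathbf{0}\pmod 2$ for every $\alpha\in\operatorname{supp}(\sigma_j)$, $j=0,\dots,m$.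
   Context: $\mathcal{M}(\mathfrak{g})=\{\sum_{j=0}^m\sigma_jg_j:\sigma_j\text{ sums of squares of polynomials}\}$ with $g_0=1$; it is Archimedean if $N-\|\mathbf{x}\|_2^2\in\mathcal{M}(\mathfrak{g})$ for some $N>0$. The sign symmetries of a finite set $\mathscr{A}\subseteq\mathbb{N}^n$ are all vectors $\mathbf{s}\in\{0,1\}^n$ with $\mathbf{s}^\intercal\alpha\equiv0\pmod2$ for all $\alpha\in\mathscr{A}$. $\operatorname{supp}$ denotes the set of exponents of monomials with nonzero coefficient. *)

(* Defs.v *)
From HB Require Import structures.
From mathcomp Require Import all_boot all_order all_algebra.
From mathcomp Require Import reals.
From mathcomp Require Import mpoly.
Set Implicit Arguments. Unset Strict Implicit. Unset Printing Implicit Defensive.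
Import GRing.Theory Num.Theory.
Local Open Scope ring_scope.

Definition is_sos (R : realType) (n : nat) (p : {mpoly R[n]}) : Prop :=
  exists s : seq {mpoly R[n]}, p = \sum_(q <- s) q ^+ 2.

Definition in_qmodule (R : realType) (n m : nat) (g : 'I_m -> {mpoly R[n]})
    (p : {mpoly R[n]}) : Prop :=
  exists (s0 : {mpoly R[n]}) (s : 'I_m -> {mpoly R[n]}),
    [/\ is_sos s0, (forall j, is_sos (s j)) & p = s0 + \sum_(j < m) s j * g j].

Definition archimedean_qmodule (R : realType) (n m : nat)
    (g : 'I_m -> {mpoly R[n]}) : Prop :=
  exists N : R, 0 < N /\ in_qmodule g (N%:MP - \sum_(i < n) 'X_i ^+ 2).

Definition in_basic_set (R : realType) (n m : nat) (g : 'I_m -> {mpoly R[n]})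
    (x : 'I_n -> R) : Prop :=
  forall j, 0 <= (g j).@[x].

Definition supp_set (R : realType) (n m : nat) (f : {mpoly R[n]})
    (g : 'I_m -> {mpoly R[n]}) (a : 'X_{1..n}) : Prop :=
  a \in msupp f \/ exists j, a \in msupp (g j).

Definition sdot (n : nat) (s : 'I_n -> bool) (a : 'X_{1..n}) : nat :=
  (\sum_(i < n) (s i : nat) * a i)%N.

Definition sign_symmetry (n : nat) (A : 'X_{1..n} -> Prop) (s : 'I_n -> bool)
    : Prop :=
  forall a, A a -> ~~ odd (sdot s a).

(* Main.v *)
Require Import Defs.
From HB Require Import structures.
From mathcomp Require Import all_boot all_order all_algebra.
From mathcomp Require Import reals.
From mathcomp Require Import mpoly.
From mathcomp Require Import boolp classical_sets.
From mathcomp Require Import ring lra.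
Import Order.TTheory GRing.Theory Num.Theory.
Local Open Scope classical_set_scope.
Local Open Scope ring_scope.
Section Cones.
Context {R : realType} {n : nat}.
Local Notation P := {mpoly R[n]}.

Definition cl (T C : P -> Prop) :=
  (forall u v, C u -> C v -> C (u + v)) /\ (forall t u, T t -> C u -> C (t * u)).

Lemma zorn_max (T S0 : P -> Prop) : cl T S0 -> ~ S0 (-1) ->
  exists Q : P -> Prop, (forall p, S0 p -> Q p) /\ cl T Q /\ ~ Q (-1) /\
    (forall C : P -> Prop, (forall p, Q p -> C p) -> cl T C -> ~ C (-1) ->
       forall p, C p -> Q p).
Proof.
move=> [S0D S0T] S0n.
pose PP := fun A : set P => cl T (A `|` S0) /\ ~ (A `|` S0) (-1).
have [A [[[AD AT] An] Amax]] : exists A, PP A /\ forall B, (A `<` B)%classic -> ~ PP B.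
  apply: Zorn_bigcup => F FP Ftot; split; last first.
    case=> [[X FX Xm1]|/S0n//]. by have [_ /(_ (or_introl Xm1))] := FP X FX.
  split.
  - have key : forall X u v, F X -> (X `|` S0) u -> (X `|` S0) v ->
        ((\bigcup_(X in F) X) `|` S0) (u + v).
      move=> X u v FX Xu Xv; have [[D _] _] := FP X FX.
      by case: (D u v Xu Xv) => [?|?]; [left; exists X|right].
    move=> u v [[X FX Xu]|S0u] [[Y FY Yv]|S0v].
    + have [XY|YX] := Ftot X Y FX FY.
      * by apply: (key Y) => //; left => //; apply: XY.
      * by apply: (key X) => //; left => //; apply: YX.
    + by apply: (key X) => //; [left|right].
    + by apply: (key Y) => //; [right|left].
    + by right; apply: S0D.
  - move=> t u Tt [[X FX Xu]|S0u]; last by right; apply: S0T.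
    have [[_ M] _] := FP X FX.
    by case: (M t u Tt (or_introl Xu)) => [?|?]; [left; exists X|right].
exists (A `|` S0); split; first by move=> p; right.
split; first by split.
split; first by [].
move=> C QC [CD CT] Cn p Cp.
have [//|nQp] := pselect ((A `|` S0) p).
exfalso; apply: (Amax C).
  split; first by move=> x Ax; apply: QC; left.
  by move=> CA; apply: nQp; left; apply: CA.
rewrite /PP; have -> : C `|` S0 = C by apply: setUidl => x S0x; apply: QC; right.
by split.
Qed.

End Cones.
Section Ext.
Context {R : realType} {n : nat}.
Local Notation P := {mpoly R[n]}.

Lemma sos0 : is_sos (0 : P). Proof. by exists [::]; rewrite big_nil. Qed.
Lemma sos_sq (q : P) : is_sos (q ^+ 2). Proof. by exists [:: q]; rewrite big_seq1. Qed.
Lemma sosD (a b : P) : is_sos a -> is_sos b -> is_sos (a + b).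
Proof. by move=> [s ->] [t ->]; exists (s ++ t); rewrite big_cat. Qed.
Lemma sosM (a b : P) : is_sos a -> is_sos b -> is_sos (a * b).
Proof.
move=> [s ->] [t ->]; exists [seq x * y | x <- s, y <- t].
rewrite big_allpairs_dep mulr_suml; apply: eq_bigr => x _.
by rewrite mulr_sumr; apply: eq_bigr => y _; rewrite exprMn.
Qed.
Lemma sosC (l : R) : 0 <= l -> is_sos (l%:MP : P).
Proof.
move=> l0; exists [:: (Num.sqrt l)%:MP].
by rewrite big_seq1 expr2 -mpolyCM -expr2 sqr_sqrtr.
Qed.
Lemma sos1 : is_sos (1 : P). Proof. by rewrite -mpolyC1; apply: sosC. Qed.

Definition Tcone : P -> Prop := fun t => exists l : R, 0 <= l /\ t = l%:MP.
Definition Tsos : P -> Prop := fun t => is_sos t.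

Definition ext (T Q : P -> Prop) (v : P) : P -> Prop :=
  fun p => exists u t, Q u /\ T t /\ p = u + t * v.

Lemma ext_cl T Q v : cl T Q -> (forall a b, T a -> T b -> T (a + b)) ->
  (forall a b, T a -> T b -> T (a * b)) -> cl T (ext T Q v).
Proof.
move=> [QD QT] TD TM; split.
  move=> _ _ [u [t [Qu [Tt ->]]]] [u' [t' [Qu' [Tt' ->]]]].
  exists (u + u'), (t + t'); split; [exact: QD|split; [exact: TD|ring]].
move=> s _ Ts [u [t [Qu [Tt ->]]]].
exists (s * u), (s * t); split; [exact: QT|split; [exact: TM|ring]].
Qed.

Definition maximal (T Q : P -> Prop) := forall C : P -> Prop,
  (forall p, Q p -> C p) -> cl T C -> ~ C (-1) -> forall p, C p -> Q p.

Lemma max_ext T Q v : cl T Q -> (forall a b, T a -> T b -> T (a + b)) ->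
  (forall a b, T a -> T b -> T (a * b)) -> T 0 -> T 1 -> Q 0 ->
  maximal T Q -> ~ Q v -> ext T Q v (-1).
Proof.
move=> Qcl TD TM T0 T1 Q0 Qmax nQv.
have [//|n1] := pselect (ext T Q v (-1)).
exfalso; apply: nQv; apply: (Qmax (ext T Q v)) => //.
- by move=> p Qp; exists p, 0; split=> //; split=> //; rewrite mul0r addr0.
- exact: ext_cl.
- by exists 0, 1; split=> //; split=> //; rewrite add0r mul1r.
Qed.

Lemma TconeD a b : Tcone a -> Tcone b -> Tcone (a + b).
Proof. by move=> [l [l0 ->]] [k [k0 ->]]; exists (l + k); rewrite mpolyCD addr_ge0. Qed.
Lemma TconeM a b : Tcone a -> Tcone b -> Tcone (a * b).
Proof. by move=> [l [l0 ->]] [k [k0 ->]]; exists (l * k); rewrite mpolyCM mulr_ge0. Qed.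
Lemma Tcone0 : Tcone 0. Proof. by exists 0; rewrite mpolyC0. Qed.
Lemma Tcone1 : Tcone 1. Proof. by exists 1; rewrite mpolyC1 ler01. Qed.

Lemma total_cone Q : cl Tcone Q -> Q 0 -> ~ Q (-1) -> maximal Tcone Q ->
  forall v, Q v \/ Q (-v).
Proof.
move=> Qcl Q0 Qn Qmax v.
have [|nv] := pselect (Q v); first by left.
have [|nmv] := pselect (Q (-v)); first by right.
have [u1 [t1 [Qu1 [[l1 [l10 ->]] e1]]]] :=
  @max_ext Tcone Q _ Qcl TconeD TconeM Tcone0 Tcone1 Q0 Qmax nv.
have [u2 [t2 [Qu2 [[l2 [l20 ->]] e2]]]] :=
  @max_ext Tcone Q _ Qcl TconeD TconeM Tcone0 Tcone1 Q0 Qmax nmv.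
exfalso; case: Qcl => QD QT.
have H : Q (- (l1 + l2)%:MP).
  have -> : - (l1 + l2)%:MP = l2%:MP * u1 + l1%:MP * u2.
    have -> : u1 = -1 - l1%:MP * v by rewrite e1; ring.
    have -> : u2 = -1 + l2%:MP * v by rewrite e2; ring.
    ring.
  by apply: (QD); apply: (QT) => //; [exists l2|exists l1].
have [s0|sn0] := eqVneq (l1 + l2) 0.
  have l1z : l1 = 0 by lra.
  by apply: Qn; rewrite e1 l1z mpolyC0 mul0r addr0.
apply: Qn; have -> : (-1 : P) = ((l1 + l2)^-1 * (- (l1 + l2)))%:MP.
  by rewrite mulrN mulVf // mpolyCN mpolyC1.
rewrite mpolyCM mpolyCN.
apply: (QT) => //; exists (l1 + l2)^-1; split=> //.
by rewrite invr_ge0 addr_ge0.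
Qed.

Lemma total_sos Q : cl Tsos Q -> Q 0 -> Q 1 -> ~ Q (-1) -> maximal Tsos Q ->
  forall v, Q v \/ Q (-v).
Proof.
move=> Qcl Q0 Q1 Qn Qmax v.
have [|nv] := pselect (Q v); first by left.
have [|nmv] := pselect (Q (-v)); first by right.
have [u1 [t1 [Qu1 [T1 e1]]]] :=
  @max_ext Tsos Q _ Qcl sosD sosM sos0 sos1 Q0 Qmax nv.
have [u2 [t2 [Qu2 [T2 e2]]]] :=
  @max_ext Tsos Q _ Qcl sosD sosM sos0 sos1 Q0 Qmax nmv.
exfalso; case: Qcl => QD QT.
have Qt1 : Q t1 by rewrite -[t1]mulr1; apply: (QT).
have Qt2 : Q t2 by rewrite -[t2]mulr1; apply: (QT).
have Qmt1 : Q (- t1).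
  have -> : - t1 = t2 + (t2 * u1 + t1 * u2).
    have -> : u1 = -1 - t1 * v by rewrite e1; ring.
    have -> : u2 = -1 + t2 * v by rewrite e2; ring.
    ring.
  by apply: (QD) => //; apply: (QD); apply: (QT).
apply: Qn; rewrite e1; apply: (QD) => //.
have -> : t1 * v = ((2^-1)%:MP * (v + 1)) ^+ 2 * t1 +
                   ((2^-1)%:MP * (v - 1)) ^+ 2 * (- t1).
  have h : (2^-1 : R) * 2 = 1 by rewrite mulVf // pnatr_eq0.
  have h2 : ((2^-1)%:MP : P) * 2%:MP = 1 by rewrite -mpolyCM h mpolyC1.
  have -> : t1 * v = t1 * v * (((2^-1)%:MP : P) * 2%:MP) ^+ 2 by rewrite h2 expr1n mulr1.
  rewrite (_ : (2%:MP : P) = 1 + 1); last by rewrite -mpolyC1 -mpolyCD.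
  ring.
by apply: (QD); apply: (QT) => //; apply: sos_sq.
Qed.

End Ext.
Section Func.
Context {R : realType} {n : nat}.
Local Notation P := {mpoly R[n]}.

Definition good (C : P -> Prop) :=
  [/\ cl Tcone C, C 1, (forall p, exists N : R, C (N%:MP - p)), ~ C (-1) &
      (forall v, C v \/ C (-v))].

Definition Lf (C : P -> Prop) (p : P) : R := sup [set r : R | C (p - r%:MP)].
Definition Icone (C : P -> Prop) (u : P) :=
  forall e : R, 0 < e -> C (e%:MP + u) /\ C (e%:MP - u).

Context (C : P -> Prop) (HC : good C).

Lemma CD u v : C u -> C v -> C (u + v).
Proof. by case: HC => [[D _] _ _ _ _]; apply: D. Qed.
Lemma CZ l u : 0 <= l -> C u -> C (l%:MP * u).
Proof. by case: HC => [[_ M] _ _ _ _] l0; apply: M; exists l. Qed.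
Lemma CC l : 0 <= l -> C (l%:MP).
Proof. by case: HC => [_ C1 _ _ _] l0; rewrite -[l%:MP]mulr1; apply: CZ. Qed.
Lemma Cconst l : C (l%:MP) -> 0 <= l.
Proof.
case: HC => [_ _ _ Cn _] Cl; rewrite leNgt; apply/negP => l0; apply: Cn.
have -> : (-1 : P) = (- l^-1)%:MP * l%:MP.
  by rewrite -mpolyCM mulNr mulVf ?mpolyCN ?mpolyC1 // lt_eqF.
by apply: CZ => //; rewrite oppr_ge0 invr_le0 ltW.
Qed.

Lemma Lf_char p : Icone C (p - (Lf C p)%:MP).
Proof.
case: HC => [_ _ Carch _ Ctot].
set E := [set r : R | C (p - r%:MP)].
have hs : has_sup E.
  split.
    have [N HN] := Carch (- p); exists (- N); rewrite /E /=.
    by rewrite mpolyCN opprK addrC; move: HN; rewrite opprK.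
  have [N HN] := Carch p; exists N => r Er.
  have : C ((N - r)%:MP) by rewrite mpolyCB (_ : _ - _ = (N%:MP - p) + (p - r%:MP)); [apply: CD|ring].
  by move/Cconst; rewrite subr_ge0.
move=> e e0; split.
  have [r Er ltr] := sup_adherent e0 hs.
  have -> : e%:MP + (p - (Lf C p)%:MP) = (p - r%:MP) + (r - (Lf C p - e))%:MP.
    by rewrite /Lf; ring.
  by apply: CD => //; apply: CC; rewrite subr_ge0 ltW.
case: (Ctot (e%:MP - (p - (Lf C p)%:MP))) => // h.
have : E (Lf C p + e).
  by rewrite /E /=; move: h; congr C; rewrite mpolyCD; ring.
move/(sup_upper_bound hs) => /=; rewrite /Lf -/E => h2.
have : e <= 0 by lra.
by rewrite leNgt e0.
Qed.

Lemma I_const a : Icone C (a%:MP) -> a = 0.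
Proof.
move=> h; apply/eqP; rewrite -normr_eq0; apply/eqP.
have [->//|an] := eqVneq a 0; first by rewrite normr0.
have ap : 0 < `|a| / 2 by rewrite divr_gt0 // normr_gt0.
have [h1 h2] := h _ ap.
rewrite -mpolyCD in h1; rewrite -mpolyCB in h2.
move/Cconst: h1; move/Cconst: h2.
have [a0|a0] := leP 0 a; [rewrite ger0_norm //|rewrite ltr0_norm //]; lra.
Qed.

Lemma I0 : Icone C 0.
Proof. by move=> e e0; rewrite addr0 subr0; split; apply: CC; rewrite ltW. Qed.
Lemma IN u : Icone C u -> Icone C (- u).
Proof. by move=> h e e0; rewrite opprK; case: (h e e0) => ??; split. Qed.
Lemma ID u v : Icone C u -> Icone C v -> Icone C (u + v).
Proof.
move=> hu hv e e0; have e2 : 0 < e / 2 by rewrite divr_gt0.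
have [u1 u2] := hu _ e2; have [v1 v2] := hv _ e2.
have ee : e = e / 2 + e / 2 by field.
rewrite {1 2}ee mpolyCD; split.
  by rewrite (_ : _ + _ = ((e/2)%:MP + u) + ((e/2)%:MP + v)); [apply: CD|ring].
by rewrite (_ : _ - _ = ((e/2)%:MP - u) + ((e/2)%:MP - v)); [apply: CD|ring].
Qed.
Lemma IZ l u : Icone C u -> Icone C (l%:MP * u).
Proof.
move=> hu.
have [->|l0] := eqVneq l 0; first by rewrite mpolyC0 mul0r; apply: I0.
move=> e e0.
have al : 0 < `|l| by rewrite normr_gt0.
have [h1 h2] := hu (e / `|l|) (divr_gt0 e0 al).
have ee : e = `|l| * (e / `|l|) by rewrite mulrC divfK // normr_eq0.
have [lp|ln] := leP 0 l.
  have la : `|l| = l by rewrite ger0_norm.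
  rewrite ee la; split.
    by rewrite (_ : _ + _ = l%:MP * ((e / `|l|)%:MP + u)); [apply: CZ|rewrite la; ring].
  by rewrite (_ : _ - _ = l%:MP * ((e / `|l|)%:MP - u)); [apply: CZ|rewrite la; ring].
have la : `|l| = - l by rewrite ltr0_norm.
rewrite ee la; split.
  rewrite (_ : _ + _ = (- l)%:MP * ((e / `|l|)%:MP - u)); first by apply: CZ => //; lra.
  by rewrite la; ring.
rewrite (_ : _ - _ = (- l)%:MP * ((e / `|l|)%:MP + u)); first by apply: CZ => //; lra.
by rewrite la; ring.
Qed.

Lemma Lf_uniq p a : Icone C (p - a%:MP) -> Lf C p = a.
Proof.
move=> h; have h2 := Lf_char p.
have := ID _ _ h2 (IN _ h).
rewrite (_ : _ + _ = (a - Lf C p)%:MP); last by ring.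
by move/I_const => /eqP; rewrite subr_eq0 => /eqP.
Qed.

Lemma LfD p q : Lf C (p + q) = Lf C p + Lf C q.
Proof.
apply: Lf_uniq; have := ID _ _ (Lf_char p) (Lf_char q).
by congr Icone; ring.
Qed.
Lemma LfZ l p : Lf C (l%:MP * p) = l * Lf C p.
Proof.
apply: Lf_uniq; have := IZ l _ (Lf_char p).
by congr Icone; ring.
Qed.
Lemma LfC l : Lf C (l%:MP) = l.
Proof. by apply: Lf_uniq; rewrite subrr; apply: I0. Qed.
Lemma LfN p : Lf C (- p) = - Lf C p.
Proof.
apply: Lf_uniq; have := IN _ (Lf_char p).
by congr Icone; ring.
Qed.
Lemma Lf_ge0 p : C p -> 0 <= Lf C p.
Proof.
move=> Cp; rewrite leNgt; apply/negP => lt0.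
have e0 : 0 < - Lf C p / 2 by lra.
have [_ h] := Lf_char p _ e0.
have := CD _ _ h Cp.
have -> : ((- Lf C p / 2)%:MP - (p - (Lf C p)%:MP) + p : P) = (- Lf C p / 2 + Lf C p)%:MP.
  by ring.
by move/Cconst => h3; have : Lf C p < 0 by []; lra.
Qed.

End Func.
Section Mult.
Context {R : realType} {n : nat}.
Local Notation P := {mpoly R[n]}.
Context (C : P -> Prop) (HC : good C) (HS : cl Tsos C).

Lemma CS t u : is_sos t -> C u -> C (t * u).
Proof. by case: HS => _ M; apply: M. Qed.

Lemma inv2K (x : P) (k : R) : k != 0 -> (k^-1)%:MP * (k%:MP * x) = x.
Proof. by move=> k0; rewrite mulrA -mpolyCM mulVf // mpolyC1 mul1r. Qed.

Lemma I_sq u : Icone C u -> forall d : R, 0 < d -> C (d%:MP - u ^+ 2).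
Proof.
move=> hu d d0; set e := Num.sqrt d.
have e0 : 0 < e by rewrite sqrtr_gt0.
have [h1 h2] := hu e e0.
have de : d%:MP = (e%:MP ^+ 2 : P) by rewrite expr2 -mpolyCM -expr2 sqr_sqrtr // ltW.
have e2 : (2 * e : R) != 0 by rewrite mulf_neq0 // ?pnatr_eq0 // gt_eqF.
rewrite de -(inv2K (e%:MP ^+ 2 - u^+2) _ e2).
apply: CZ => //; first by rewrite invr_ge0 mulr_ge0 // ltW.
have -> : ((2 * e)%:MP * (e%:MP ^+ 2 - u ^+ 2) : P) =
   (e%:MP + u) ^+ 2 * (e%:MP - u) + (e%:MP - u) ^+ 2 * (e%:MP + u).
  rewrite (_ : (2 * e)%:MP = (1 + 1) * e%:MP :> P); first by ring.
  by rewrite mpolyCM mpolyCD mpolyC1.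
by apply: CD => //; apply: CS => //; apply: sos_sq.
Qed.

Lemma IM u v : Icone C u -> Icone C v -> Icone C (u * v).
Proof.
move=> hu hv e e0.
have a := I_sq _ hu _ e0; have b := I_sq _ hv _ e0.
have t2 : (2 : R) != 0 by rewrite pnatr_eq0.
have h2 : (2%:MP : P) = 1 + 1 by rewrite -mpolyC1 -mpolyCD.
split.
  rewrite -(inv2K (e%:MP + u * v) _ t2).
  apply: CZ => //; first by rewrite invr_ge0.
  have -> : (2%:MP * (e%:MP + u * v) : P) =
     (u + v) ^+ 2 + ((e%:MP - u ^+ 2) + (e%:MP - v ^+ 2)) by rewrite h2; ring.
  apply: CD => //; last by apply: CD.
  by rewrite -[_ ^+ 2]mulr1; apply: CS; [apply: sos_sq|case: HC].
rewrite -(inv2K (e%:MP - u * v) _ t2).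
apply: CZ => //; first by rewrite invr_ge0.
have -> : (2%:MP * (e%:MP - u * v) : P) =
   (u - v) ^+ 2 + ((e%:MP - u ^+ 2) + (e%:MP - v ^+ 2)) by rewrite h2; ring.
apply: CD => //; last by apply: CD.
by rewrite -[_ ^+ 2]mulr1; apply: CS; [apply: sos_sq|case: HC].
Qed.

Lemma LfM p q : Lf C (p * q) = Lf C p * Lf C q.
Proof.
apply: Lf_uniq => //.
have hp := Lf_char _ HC p; have hq := Lf_char _ HC q.
have := ID _ HC _ _ (ID _ HC _ _ (IZ _ HC (Lf C p) _ hq) (IZ _ HC (Lf C q) _ hp)) (IM _ _ hp hq).
by congr Icone; rewrite mpolyCM; ring.
Qed.

End Mult.
Section QMod.
Context {R : realType} {n m : nat} (g : 'I_m -> {mpoly R[n]}).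
Local Notation P := {mpoly R[n]}.
Local Notation MM := (in_qmodule g).

Lemma MM0 : MM 0.
Proof.
exists 0, (fun _ => 0); split; [exact: sos0|move=> _; exact: sos0|].
by rewrite big1 ?addr0 // => j _; rewrite mul0r.
Qed.

Lemma MMD u v : MM u -> MM v -> MM (u + v).
Proof.
move=> [s0 [s [h0 hs ->]]] [t0 [t [k0 kt ->]]].
exists (s0 + t0), (fun j => s j + t j); split.
- exact: sosD.
- by move=> j; apply: sosD.
- by rewrite (_ : \sum_(j < m) (s j + t j) * g j = \sum_(j < m) s j * g j + \sum_(j < m) t j * g j);
    [ring|rewrite -big_split; apply: eq_bigr => j _; rewrite mulrDl].
Qed.

Lemma MMS t u : is_sos t -> MM u -> MM (t * u).
Proof.
move=> ht [s0 [s [h0 hs ->]]].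
exists (t * s0), (fun j => t * s j); split.
- exact: sosM.
- by move=> j; apply: sosM.
- by rewrite mulrDr mulr_sumr; congr (_ + _); apply: eq_bigr => j _; rewrite mulrA.
Qed.

Lemma MMsos t : is_sos t -> MM t.
Proof.
move=> ht; exists t, (fun _ => 0); split=> //; first by move=> _; exact: sos0.
by rewrite big1 ?addr0 // => j _; rewrite mul0r.
Qed.

Lemma MMg j : MM (g j).
Proof.
exists 0, (fun k => if k == j then 1 else 0); split.
- exact: sos0.
- by move=> k; case: (k == j); [exact: sos1|exact: sos0].
- rewrite add0r (bigD1 j) //= eqxx mul1r big1 ?addr0 // => k /negbTE ->.
  by rewrite mul0r.
Qed.

Lemma MMcl : cl Tsos MM.
Proof. by split; [exact: MMD|move=> t u; exact: MMS]. Qed.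

Lemma clsos_cone (C : P -> Prop) : cl Tsos C -> cl Tcone C.
Proof. by case=> D M; split=> // t u [l [l0 ->]]; apply: M; apply: sosC. Qed.

Lemma const_ge0 (C : P -> Prop) l : cl Tsos C -> ~ C (-1) -> C (l%:MP) -> 0 <= l.
Proof.
move=> [_ M] Cn Cl; rewrite leNgt; apply/negP => l0; apply: Cn.
have -> : (-1 : P) = (- l^-1)%:MP * l%:MP.
  by rewrite -mpolyCM mulNr mulVf ?mpolyCN ?mpolyC1 // lt_eqF.
by apply: M => //; apply: sosC; rewrite oppr_ge0 invr_le0 ltW.
Qed.

Definition B2 (p : P) := exists N : R, 0 <= N /\ MM (N%:MP - p ^+ 2).

Lemma B2C c : B2 (c%:MP).
Proof.
exists (c ^+ 2); rewrite sqr_ge0; split=> //.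
rewrite (_ : (c ^+ 2)%:MP = (c%:MP) ^+ 2 :> P); first by rewrite subrr; exact: MM0.
by rewrite !expr2 mpolyCM.
Qed.

Lemma B2D p q : B2 p -> B2 q -> B2 (p + q).
Proof.
move=> [N [N0 hN]] [K [K0 hK]]; exists (2 * N + 2 * K); split.
  by rewrite addr_ge0 // mulr_ge0.
have -> : ((2 * N + 2 * K)%:MP - (p + q) ^+ 2 : P) =
  (1 + 1) * (N%:MP - p ^+ 2) + ((1 + 1) * (K%:MP - q ^+ 2) + (p - q) ^+ 2).
  by rewrite (_ : 2 = 1 + 1 :> R) //; ring.
have s2 : is_sos (1 + 1 : P) by apply: sosD; apply: sos1.
apply: MMD; first by apply: MMS.
by apply: MMD; [apply: MMS|apply: MMsos; apply: sos_sq].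
Qed.

Lemma B2M p q : B2 p -> B2 q -> B2 (p * q).
Proof.
move=> [N [N0 hN]] [K [K0 hK]]; exists (N * K); split; first by rewrite mulr_ge0.
have -> : ((N * K)%:MP - (p * q) ^+ 2 : P) =
  K%:MP * (N%:MP - p ^+ 2) + p ^+ 2 * (K%:MP - q ^+ 2) by ring.
by apply: MMD; apply: MMS => //; [apply: sosC|apply: sos_sq].
Qed.

Lemma B2_all : archimedean_qmodule g -> forall p, B2 p.
Proof.
move=> [N [N0 hN]].
have B2X : forall i, B2 'X_i.
  move=> i; exists N; split; first by rewrite ltW.
  have -> : (N%:MP - 'X_i ^+ 2 : P) = (N%:MP - \sum_(i0 < n) 'X_i0 ^+ 2) +
       \sum_(j < n | j != i) 'X_j ^+ 2.
    by rewrite (bigD1 i) //=; ring.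
  apply: MMD => //; apply: MMsos.
  by apply: (big_ind (@is_sos R n)) => //; [exact: sos0|exact: sosD|move=> j _; exact: sos_sq].
have B2Xn : forall i k, B2 ('X_i ^+ k).
  move=> i; elim=> [|k IH]; first by rewrite expr0 -mpolyC1; apply: B2C.
  by rewrite exprS; apply: B2M.
move=> p; elim/mpolyind: p => [|c mm p _ _ IH]; first by rewrite -mpolyC0; apply: B2C.
apply: B2D => //; rewrite -mul_mpolyC; apply: B2M; first exact: B2C.
rewrite mpolyXE_id; apply: (big_ind B2).
- by rewrite -mpolyC1; apply: B2C.
- exact: B2M.
- by move=> i _; apply: B2Xn.
Qed.

Lemma MM_arch : archimedean_qmodule g -> forall p, exists N : R, MM (N%:MP - p).
Proof.
move=> ha p; have [N [N0 hN]] := B2_all ha p.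
exists ((N + 1) / 2).
have t2 : (2 : R) != 0 by rewrite pnatr_eq0.
rewrite -(inv2K (((N + 1) / 2)%:MP - p) _ t2).
apply: MMS; first by apply: sosC; rewrite invr_ge0.
have -> : (2%:MP * (((N + 1) / 2)%:MP - p) : P) = (N%:MP - p ^+ 2) + (1 - p) ^+ 2.
  rewrite mulrBr -mpolyCM mulrC divfK //; ring.
by apply: MMD => //; apply: MMsos; apply: sos_sq.
Qed.

End QMod.
Section Putinar.
Context {R : realType} {n m : nat} (g : 'I_m -> {mpoly R[n]}) (f : {mpoly R[n]}).
Local Notation P := {mpoly R[n]}.
Local Notation MM := (in_qmodule g).
Context (ha : archimedean_qmodule g) (hpos : forall x, in_basic_set g x -> 0 < f.@[x]).

Lemma phi_eval (phi : P -> R) : (forall p q, phi (p + q) = phi p + phi q) ->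
  (forall p q, phi (p * q) = phi p * phi q) -> (forall c, phi c%:MP = c) ->
  forall p, phi p = p.@[fun i => phi 'X_i].
Proof.
move=> hD hM hC p.
have h0 : phi 0 = 0 by rewrite -mpolyC0 hC.
have h1 : phi 1 = 1 by rewrite -mpolyC1 hC.
rewrite {1}(mpolyE p) mevalE (big_morph phi hD h0); apply: eq_bigr => mm _.
rewrite -mul_mpolyC hM hC mpolyXE_id (big_morph phi hM h1); congr (_ * _).
apply: eq_bigr => i _; elim: (mm i) => [|k IH]; first by rewrite !expr0 h1.
by rewrite !exprS hM IH.
Qed.

Lemma MM_improper : MM (-1) -> MM f.
Proof.
move=> h.
have t2 : (2 : R) != 0 by rewrite pnatr_eq0.
have -> : f = ((2^-1)%:MP * (f + 1)) ^+ 2 * 1 + ((2^-1)%:MP * (f - 1)) ^+ 2 * (-1).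
  rewrite -[LHS](inv2K _ _ t2).
  rewrite (_ : (2%:MP : P) = 1 + 1); last by rewrite -mpolyC1 -mpolyCD.
  set c := (2^-1)%:MP.
  have hc : c * (1 + 1) = 1.
    by rewrite /c -mpolyC1 -mpolyCD -mpolyCM mulVf.
  transitivity (c * (c * (1 + 1)) * ((1 + 1) * f)); first by rewrite hc mulr1.
  ring.
apply: MMD; apply: MMS => //; try apply: sos_sq.
by apply: MMsos; apply: sos1.
Qed.

Lemma putinar_mem : MM f.
Proof.
have [/MM_improper //|Mn] := pselect (MM (-1)).
have arch := MM_arch g ha.
set E := [set r : R | MM (f - r%:MP)].
have hs : has_sup E.
  split.
    have [N HN] := arch (- f); exists (- N); rewrite /E /=.
    by rewrite mpolyCN opprK addrC; move: HN; rewrite opprK.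
  have [N HN] := arch f; exists N => r Er.
  have : MM ((N - r)%:MP).
    by rewrite mpolyCB (_ : _ - _ = (N%:MP - f) + (f - r%:MP)); [apply: MMD|ring].
  by move/(const_ge0 _ _ (MMcl g) Mn); rewrite subr_ge0.
set c := sup E.
have Mfc : forall e : R, 0 < e -> MM (f - c%:MP + e%:MP).
  move=> e e0; have [r Er ltr] := sup_adherent e0 hs.
  have -> : f - c%:MP + e%:MP = (f - r%:MP) + (r - (c - e))%:MP by ring.
  by apply: MMD => //; apply: MMsos; apply: sosC; rewrite subr_ge0 ltW.
pose S0 := fun p : P => exists u l, MM u /\ 0 <= l /\ p = u + l%:MP * (c%:MP - f).
have S0cl : cl Tcone S0.
  split.
    move=> _ _ [u [l [Mu [l0 ->]]]] [u' [l' [Mu' [l0' ->]]]].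
    exists (u + u'), (l + l'); split; [exact: MMD|split; [exact: addr_ge0|]].
    by rewrite mpolyCD; ring.
  move=> _ _ [k [k0 ->]] [u [l [Mu [l0 ->]]]].
  exists (k%:MP * u), (k * l); split; [apply: MMS => //; exact: sosC|split; [exact: mulr_ge0|]].
  by rewrite mpolyCM; ring.
have S0n : ~ S0 (-1).
  move=> [u [l [Mu [l0 e]]]].
  have [l00|lp] := eqVneq l 0.
    by apply: Mn; move: Mu; rewrite (_ : u = -1) // e l00 mpolyC0 mul0r addr0.
  have lgt : 0 < l by rewrite lt_def lp.
  have : E (c + l^-1).
    rewrite /E /=.
    have -> : f - (c + l^-1)%:MP = (l^-1)%:MP * u.
      have -> : u = -1 - l%:MP * (c%:MP - f) by rewrite e; ring.
      rewrite mulrBr mulrN1 mulrA -mpolyCM mulVf // mpolyC1 mpolyCD; ring.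
    by apply: MMS => //; apply: sosC; rewrite invr_ge0 ltW.
  move/(sup_upper_bound hs) => /=; rewrite -/c => h.
  have : 0 < l^-1 by rewrite invr_gt0.
  lra.
have [C1 [S0C1 [C1cl [C1n C1max]]]] := zorn_max _ _ S0cl S0n.
have MC1 : forall p, MM p -> C1 p.
  by move=> p Mp; apply: S0C1; exists p, 0; rewrite mpolyC0 mul0r addr0.
have C1good : good C1.
  split=> //.
  - by apply: MC1; apply: MMsos; apply: sos1.
  - by move=> p; have [N HN] := arch p; exists N; apply: MC1.
  - by apply: total_cone => //; apply: MC1; apply: MM0.
have LD := LfD _ C1good; have LZ := LfZ _ C1good; have LC := LfC _ C1good.
have LN := LfN _ C1good; have L0 := Lf_ge0 _ C1good.
have Lfc : Lf C1 (f - c%:MP) <= 0.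
  have : 0 <= Lf C1 (c%:MP - f).
    by apply: L0; apply: S0C1; exists 0, 1; rewrite mpolyC1 mul1r add0r; split=> //; exact: MM0.
  by rewrite !LD !LN !LC; lra.
have Lsq : forall q, 0 <= Lf C1 (q ^+ 2 * (f - c%:MP)).
  move=> q; rewrite leNgt; apply/negP => lt0.
  set a := Lf C1 (q ^+ 2 * (f - c%:MP)) in lt0.
  set b := Lf C1 (q ^+ 2).
  have b0 : 0 <= b by apply: L0; apply: MC1; apply: MMsos; apply: sos_sq.
  set e := - a / (b + 1).
  have e0 : 0 < e by rewrite divr_gt0 //; lra.
  have eb : e * b + e = - a.
    have h : e * (b + 1) = - a by rewrite /e divfK //; apply: lt0r_neq0; lra.
    by rewrite mulrDr mulr1 in h.
  have : 0 <= Lf C1 (q ^+ 2 * (f - c%:MP + e%:MP)).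
    by apply: L0; apply: MC1; apply: MMS => //; [apply: sos_sq|apply: Mfc].
  rewrite mulrDr LD (mulrC _ e%:MP) LZ -/a -/b.
  lra.
have Lf0 : Lf C1 (f - c%:MP) = 0.
  have := Lsq 1; rewrite expr1n mul1r; lra.
have CS : forall q, Lf C1 (q * (f - c%:MP)) = 0.
  move=> q; set h := f - c%:MP in Lf0 Lsq *; clearbody h; apply/eqP; apply/negP => a0.
  set a := Lf C1 (q * h) in a0.
  set b := Lf C1 (q ^+ 2 * h).
  have b0 : 0 <= b by apply: Lsq.
  set k := (b + 1)^-1.
  have k0 : 0 < k by rewrite invr_gt0; lra.
  have kb : k * b <= 1.
    rewrite /k ler_pdivrMl; last by lra.
    lra.
  have := Lsq (1 + (- a * k)%:MP * q).
  have -> : (1 + (- a * k)%:MP * q) ^+ 2 * h =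
     h + (2 * (- a * k))%:MP * (q * h) +
     ((- a * k) ^+ 2)%:MP * (q ^+ 2 * h).
    by ring.
  rewrite !LD !LZ Lf0 -/a -/b add0r.
  have -> : 2 * (- a * k) * a + (- a * k) ^+ 2 * b = a ^+ 2 * k * (k * b - 2) by ring.
  have a2 : 0 < a ^+ 2.
    have a0' : a != 0 by apply/negP.
    by rewrite lt0r sqr_ge0 sqrf_eq0 a0'.
  move=> h0; have : a ^+ 2 * k * (k * b - 2) < 0.
    by rewrite pmulr_rlt0; [lra|exact: mulr_gt0].
  lra.
have LC0 : Lf C1 0 = 0 by rewrite -mpolyC0 LC.
pose QL := fun p : P => forall q, 0 <= Lf C1 (q ^+ 2 * p).
have QLcl : cl Tsos QL.
  split.
    by move=> u v hu hv q; rewrite mulrDr LD addr_ge0.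
  move=> t u [s ->] hu q; elim: s => [|r s IH].
    by rewrite big_nil mul0r mulr0 LC0.
  rewrite big_cons !mulrDl mulrDr LD addr_ge0 //.
  by rewrite (_ : q ^+ 2 * (r ^+ 2 * u) = (q * r) ^+ 2 * u); [apply: hu|ring].
have MQL : forall p, MM p -> QL p.
  by move=> p Mp q; apply: L0; apply: MC1; apply: MMS => //; apply: sos_sq.
have QLn : ~ QL (-1).
  move/(_ 1); rewrite expr1n mul1r -mpolyC1 -mpolyCN LC; lra.
have QLcf : QL (c%:MP - f).
  move=> q; rewrite (_ : q ^+ 2 * (c%:MP - f) = - (q ^+ 2 * (f - c%:MP))); last by ring.
  by rewrite LN CS oppr0.
have [Q2 [QLQ2 [Q2cl [Q2n Q2max]]]] := zorn_max _ _ QLcl QLn.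
have MQ2 : forall p, MM p -> Q2 p by move=> p Mp; apply: QLQ2; apply: MQL.
have Q20 : Q2 0 by apply: MQ2; apply: MM0.
have Q21 : Q2 1 by apply: MQ2; apply: MMsos; apply: sos1.
have Q2good : good Q2.
  split=> //.
  - exact: clsos_cone.
  - by move=> p; have [N HN] := arch p; exists N; apply: MQ2.
  - exact: total_sos.
have phiE := phi_eval (Lf Q2) (LfD _ Q2good) (LfM _ Q2good Q2cl) (LfC _ Q2good).
set x := fun i => Lf Q2 'X_i in phiE.
have Xb : in_basic_set g x.
  by move=> j; rewrite -phiE; apply: (Lf_ge0 _ Q2good); apply: MQ2; apply: MMg.
have fx := hpos _ Xb; rewrite -phiE in fx.
have : 0 <= Lf Q2 (c%:MP - f) by apply: (Lf_ge0 _ Q2good); apply: QLQ2.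
rewrite (LfD _ Q2good) (LfN _ Q2good) (LfC _ Q2good) => cf.
have c0 : 0 < c / 2 by lra.
have [r Er ltr] := sup_adherent c0 hs.
have -> : f = (f - r%:MP) + r%:MP by ring.
apply: MMD; [exact: Er|apply: MMsos; apply: sosC; rewrite -/c in ltr; lra].
Qed.

End Putinar.
Section Tau.
Context {R : realType} {n : nat}.
Local Notation P := {mpoly R[n]}.

Definition hsign (r : 'I_n -> bool) (i : 'I_n) : P := if r i then - 'X_i else 'X_i.
Definition tau (r : 'I_n -> bool) (p : P) : P := mmap (@mpolyC n R) (hsign r) p.

Lemma tauD r p q : tau r (p + q) = tau r p + tau r q.
Proof. exact: mmapD. Qed.
Lemma tauM r p q : tau r (p * q) = tau r p * tau r q.
Proof. exact: (rmorphM (mmap (@mpolyC n R) (hsign r))). Qed.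
Lemma tau0 r : tau r 0 = 0.
Proof. exact: mmap0. Qed.
Lemma tau_sum r (I : Type) (s : seq I) (Pr : pred I) (F : I -> P) :
  tau r (\sum_(i <- s | Pr i) F i) = \sum_(i <- s | Pr i) tau r (F i).
Proof. exact: (big_morph (tau r) (tauD r) (tau0 r)). Qed.

Lemma mmap1_sign r mm :
  mmap1 (hsign r) mm = ((-1) ^+ sdot r mm)%:MP * 'X_[mm].
Proof.
rewrite /mmap1 mpolyXE_id /sdot -prodrXr rmorph_prod -big_split /=.
apply: eq_bigr => i _; rewrite /hsign.
case: (r i); last by rewrite mul0n expr0 mpolyC1 mul1r.
by rewrite mul1n (exprNn ('X_i : P)) rmorphXn rmorphN1.
Qed.

Lemma coef_sumZ (c : 'X_{1..n} -> R) (p : P) a :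
  (\sum_(mm <- msupp p) (c mm * p@_mm) *: 'X_[mm])@_a = c a * p@_a.
Proof.
rewrite [in RHS](mpolyE p) !raddf_sum /= mulr_sumr; apply: eq_bigr => mm _.
rewrite !mcoeffZ mcoeffX; case: eqP => [->|_]; first by rewrite !mulr1.
by rewrite !mulr0.
Qed.

Lemma tau_coef r (p : P) a : (tau r p)@_a = (-1) ^+ sdot r a * p@_a.
Proof.
rewrite -(coef_sumZ (fun mm => (-1) ^+ sdot r mm)); congr mcoeff.
rewrite /tau /mmap; apply: eq_bigr => mm _.
by rewrite mmap1_sign mulrA -mpolyCM mul_mpolyC mulrC.
Qed.

Lemma sign_odd k : (-1) ^+ k = (if odd k then -1 else 1 : R).
Proof. by rewrite -signr_odd; case: (odd k); rewrite ?expr1 ?expr0. Qed.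

Lemma sdot_xor (r1 r2 : 'I_n -> bool) a :
  odd (sdot (fun i => r1 i (+) r2 i) a) = odd (sdot r1 a) (+) odd (sdot r2 a).
Proof.
rewrite /sdot !(big_morph odd oddD (erefl (odd 0))).
rewrite -big_split /=; apply: eq_bigr => i _.
by rewrite !oddM; case: (r1 i); case: (r2 i); case: (odd (a i)).
Qed.

Lemma sdot_ext (r1 r2 : 'I_n -> bool) a : r1 =1 r2 -> sdot r1 a = sdot r2 a.
Proof. by move=> e; rewrite /sdot; apply: eq_bigr => i _; rewrite e. Qed.

End Tau.
Section Avg.
Context {R : realType} {n m : nat} (g : 'I_m -> {mpoly R[n]}) (f : {mpoly R[n]}).
Local Notation P := {mpoly R[n]}.
Local Notation A := (supp_set f g).

Definition Gp : pred {ffun 'I_n -> bool} := fun r => `[< sign_symmetry A r >].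
Definition KK : R := \sum_(r | Gp r) 1.
Definition avg (p : P) : P := (KK^-1)%:MP * \sum_(r | Gp r) tau r p.

Lemma Gp0 : Gp [ffun=> false].
Proof.
apply/asboolP => a _; rewrite /sdot big1 // => i _.
by rewrite ffunE mul0n.
Qed.

Lemma KK_gt0 : 0 < KK.
Proof.
rewrite /KK (bigD1 [ffun=> false]) /=; last exact: Gp0.
by rewrite ltr_pwDl // sumr_ge0.
Qed.

Lemma tau_fix r (p : P) : Gp r -> (forall a, a \in msupp p -> A a) -> tau r p = p.
Proof.
move=> /asboolP Gr hp; apply/mpolyP => a; rewrite tau_coef.
have [ap|an] := boolP (a \in msupp p).
  by rewrite sign_odd (negbTE (Gr a (hp a ap))) mul1r.
by move: an; rewrite -mcoeff_eq0 => /eqP ->; rewrite mulr0.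
Qed.

Lemma avgD p q : avg (p + q) = avg p + avg q.
Proof. by rewrite /avg -mulrDr -big_split /=; congr (_ * _); apply: eq_bigr => r _; rewrite tauD. Qed.

Lemma avg0 : avg 0 = 0.
Proof. by rewrite /avg big1 ?mulr0 // => r _; rewrite tau0. Qed.

Lemma avg_fix p : (forall a, a \in msupp p -> A a) -> avg p = p.
Proof.
move=> hp; rewrite /avg (eq_bigr (fun _ => p)); last by move=> r Gr; rewrite tau_fix.
have -> : \sum_(r | Gp r) p = KK%:MP * p.
  by rewrite /KK rmorph_sum mulr_suml; apply: eq_bigr => r _; rewrite rmorph1 mul1r.
by rewrite inv2K // gt_eqF // KK_gt0.
Qed.

Lemma avgM p j : avg (p * g j) = avg p * g j.
Proof.
rewrite /avg -mulrA mulr_suml; congr (_ * _); apply: eq_bigr => r Gr.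
rewrite tauM (tau_fix r (g j) Gr) // => a ha; by right; exists j.
Qed.

Lemma avg_sos p : is_sos p -> is_sos (avg p).
Proof.
move=> [s ->]; set c := Num.sqrt (KK^-1).
exists [seq c%:MP * tau r q | r : {ffun 'I_n -> bool} <- [seq r <- index_enum {ffun 'I_n -> bool} | Gp r], q <- s].
rewrite big_allpairs_dep /= big_filter /avg mulr_sumr; apply: eq_bigr => r _.
rewrite tau_sum mulr_sumr; apply: eq_bigr => q _.
rewrite exprMn tauM -expr2.
have -> : (c%:MP : P) ^+ 2 = (KK^-1)%:MP.
  by rewrite expr2 -mpolyCM -expr2 sqr_sqrtr // invr_ge0 ltW // KK_gt0.
by [].
Qed.

Lemma avg_coef p a : (avg p)@_a = KK^-1 * (\sum_(r | Gp r) (-1) ^+ sdot r a) * p@_a.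
Proof.
rewrite /avg mcoeffCM raddf_sum /= -mulrA mulr_suml; congr (_ * _).
by apply: eq_bigr => r _; rewrite tau_coef.
Qed.

Lemma avg_supp p a : a \in msupp (avg p) ->
  forall r, sign_symmetry A r -> ~~ odd (sdot r a).
Proof.
move=> ha r Sr; apply/negP => odda.
pose r0 : {ffun 'I_n -> bool} := [ffun i => r i].
have e0 : forall b, sdot r0 b = sdot r b by move=> b; apply: sdot_ext => i; rewrite ffunE.
have G0 : Gp r0 by apply/asboolP => b Ab; rewrite e0; apply: Sr.
pose x (t : {ffun 'I_n -> bool}) : {ffun 'I_n -> bool} := [ffun i => t i (+) r0 i].
have xx : forall t, x (x t) = t.
  by move=> t; apply/ffunP => i; rewrite !ffunE addbK.
have xinj : injective x by apply: (can_inj xx).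
have ex : forall t b, odd (sdot (x t) b) = odd (sdot t b) (+) odd (sdot r0 b).
  move=> t b; rewrite -sdot_xor; congr odd; apply: sdot_ext => i; by rewrite ffunE.
have Gx : forall t, Gp (x t) = Gp t.
  have h : forall t, Gp t -> Gp (x t).
    move=> t /asboolP Gt; apply/asboolP => b Ab.
    by rewrite ex (negbTE (Gt b Ab)) (negbTE ((asboolP _ G0) b Ab)).
  move=> t; apply/idP/idP; last exact: h.
  by move=> /h; rewrite xx.
set S := \sum_(r | Gp r) ((-1) ^+ sdot r a : R).
have SS : S = - S.
  rewrite {1}/S (reindex_inj xinj) /= (eq_bigl Gp); last by move=> t; rewrite Gx.
  rewrite /S -sumrN; apply: eq_bigr => t _.
  rewrite sign_odd ex e0 odda sign_odd; case: (odd (sdot t a)) => /=; by rewrite ?opprK.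
have S0 : S = 0 by move: SS; lra.
by move: ha; rewrite mcoeff_msupp avg_coef -/S S0 mulr0 mul0r eqxx.
Qed.

End Avg.

Theorem theorem7p6 (R : realType) (n m : nat) (g : 'I_m -> {mpoly R[n]})
    (f : {mpoly R[n]}) :
  archimedean_qmodule g ->
  (forall x : 'I_n -> R, in_basic_set g x -> 0 < f.@[x]) ->
  exists (s0 : {mpoly R[n]}) (s : 'I_m -> {mpoly R[n]}),
    [/\ is_sos s0, (forall j, is_sos (s j)),
        f = s0 + \sum_(j < m) s j * g j,
        (forall a, a \in msupp s0 ->
           forall r, sign_symmetry (supp_set f g) r -> ~~ odd (sdot r a)) &
        (forall j a, a \in msupp (s j) ->
           forall r, sign_symmetry (supp_set f g) r -> ~~ odd (sdot r a))].
Proof.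
move=> ha hpos.
have [s0 [s [h0 hs hf]]] := putinar_mem g f ha hpos.
exists (avg g f s0), (fun j => avg g f (s j)); split.
- exact: avg_sos.
- by move=> j; apply: avg_sos.
- have hfix : avg g f f = f by apply: avg_fix => a ha'; left.
  have e : avg g f (s0 + \sum_(j < m) s j * g j) =
      avg g f s0 + \sum_(j < m) avg g f (s j) * g j.
    rewrite avgD (big_morph (avg g f) (avgD g f) (avg0 g f)); congr (_ + _).
    by apply: eq_bigr => j _; rewrite avgM.
  by rewrite -e -hf hfix.
- move=> a; exact: avg_supp.
- move=> j a; exact: avg_supp.
Qed.
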